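(* For each $n\ge1$ let $f_n:\{1,\dots,n\}^2\to[0,\infty)$ be non-decreasing in each of its two arguments separately. Suppose that $\liminf_{n\to\infty}f_n(p_n,q_n)>0$ for every sequence $\{(p_n,q_n)\}$ with $1\le q_n\le p_n\le n$ satisfying any one of the following conditions: (i) $q_n\equiv1$ and $\lim_{n\to\infty}p_n/n$ exists and lies in $(0,1)$; (ii) $q_n\to\infty$, $\lim_{n\to\infty}q_n/p_n=0$, and $\lim_{n\to\infty}p_nq_n/n$ exists and lies in $(0,\infty)$; (iii) $\lim_{n\to\infty}p_n/\sqrt n$ and $\lim_{n\to\infty}q_n/\sqrt n$ exist and lie in $(0,\infty)$. Then $\liminf_{n\to\infty}f_n(p_n,q_n)>0$ for every sequence $\{(p_n,q_n)\}$ with $1\le q_n\le p_n\le n$ such that $\lim_{n\to\infty}p_nq_n/n$ exists and lies in $(0,\infty)$. *)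

(* Defs.v *)
From Stdlib Require Import Reals.
From Coquelicot Require Import Coquelicot.
Open Scope R_scope.

(* f n p q is f_n(p,q); only values with 1 <= p,q <= n matter. *)
Definition admissible_f (f : nat -> nat -> nat -> R) : Prop :=
  forall n : nat, (1 <= n)%nat ->
    (forall p q, (1 <= p <= n)%nat -> (1 <= q <= n)%nat -> 0 <= f n p q) /\
    (forall p p' q, (1 <= p)%nat -> (p <= p')%nat -> (p' <= n)%nat ->
        (1 <= q <= n)%nat -> f n p q <= f n p' q) /\
    (forall p q q', (1 <= p <= n)%nat -> (1 <= q)%nat -> (q <= q')%nat ->
        (q' <= n)%nat -> f n p q <= f n p q').

Definition admissible_seq (p q : nat -> nat) : Prop :=
  forall n : nat, (1 <= n)%nat -> (1 <= q n)%nat /\ (q n <= p n)%nat /\ (p n <= n)%nat.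

Definition liminf_pos (f : nat -> nat -> nat -> R) (p q : nat -> nat) : Prop :=
  Rbar_lt (Finite 0) (LimInf_seq (fun n => f n (p n) (q n))).

Definition lim_in (u : nat -> R) (a b : R) : Prop :=
  exists l : R, is_lim_seq u (Finite l) /\ a < l < b.

Definition lim_in_pos (u : nat -> R) : Prop :=
  exists l : R, is_lim_seq u (Finite l) /\ 0 < l.

Definition cond_i (p q : nat -> nat) : Prop :=
  (forall n, q n = 1%nat) /\ lim_in (fun n => INR (p n) / INR n) 0 1.

Definition cond_ii (p q : nat -> nat) : Prop :=
  is_lim_seq (fun n => INR (q n)) p_infty /\
  is_lim_seq (fun n => INR (q n) / INR (p n)) (Finite 0) /\
  lim_in_pos (fun n => INR (p n) * INR (q n) / INR n).

Definition cond_iii (p q : nat -> nat) : Prop :=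
  lim_in_pos (fun n => INR (p n) / sqrt (INR n)) /\
  lim_in_pos (fun n => INR (q n) / sqrt (INR n)).

(* Main.v *)
Require Import Defs.
From Stdlib Require Import Reals ZArith Lra Lia ClassicalEpsilon Classical.
From Coquelicot Require Import Coquelicot.
Open Scope R_scope.

Definition nfl (x : R) : nat := Z.to_nat (Int_part x).

Lemma nfl_spec x : 0 <= x -> INR (nfl x) <= x < INR (nfl x) + 1.
Proof.
  intros Hx. destruct (base_Int_part x) as [H1 H2].
  assert (Hz : (0 <= Int_part x)%Z).
  { apply le_IZR. assert (IZR (Int_part x) > -1) by lra.
    destruct (Z.lt_ge_cases (Int_part x) 0) as [h|h]; [|apply IZR_le; lia].
    assert (Int_part x <= -1)%Z by lia. apply IZR_le in H0. lra. }
  unfold nfl. rewrite INR_IZR_INZ, Z2Nat.id by auto. lra.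
Qed.

Lemma nfl_le x (m : nat) : 0 <= x -> x <= INR m -> (nfl x <= m)%nat.
Proof. intros H1 H2. apply INR_le. pose proof (nfl_spec x H1). lra. Qed.

Lemma le_nfl x (m : nat) : INR m <= x -> (m <= nfl x)%nat.
Proof. intros H. assert (0 <= x) by (pose proof (pos_INR m); lra).
  pose proof (nfl_spec x H0). destruct (le_lt_dec m (nfl x)); auto.
  apply le_INR in l. rewrite S_INR in l. lra. Qed.

Lemma lim_inv_INR : is_lim_seq (fun n => / INR n) 0.
Proof.
  replace (Finite 0) with (Rbar_inv p_infty) by reflexivity.
  apply is_lim_seq_inv. apply is_lim_seq_INR. discriminate.
Qed.

Lemma lim_sqrt_INR : is_lim_seq (fun n => sqrt (INR n)) p_infty.
Proof.
  unfold is_lim_seq. eapply filterlim_comp. apply is_lim_seq_INR.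
  intros P HP. apply filterlim_sqrt_p in HP. destruct HP as [M HM].
  exists (Rmax M 0). intros x Hx. apply HM. pose proof (Rmax_l M 0); lra.
Qed.

Lemma squeeze_err (x y g h : nat -> R) (l : R) :
  is_lim_seq (fun n => h n / g n) 0 ->
  eventually (fun n => 0 < g n) ->
  eventually (fun n => Rabs (y n - x n) <= h n) ->
  is_lim_seq (fun n => x n / g n) l ->
  is_lim_seq (fun n => y n / g n) l.
Proof.
  intros Hh Hg Hyx Hx.
  apply is_lim_seq_le_le_loc with (u := fun n => x n / g n + - (h n / g n))
     (w := fun n => x n / g n + h n / g n).
  - destruct Hg as [N1 H1]; destruct Hyx as [N2 H2]. exists (max N1 N2).
    intros n Hn. specialize (H1 n ltac:(lia)). specialize (H2 n ltac:(lia)).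
    apply Rabs_le_between in H2.
    unfold Rdiv. split.
    + rewrite Ropp_mult_distr_l, <- Rmult_plus_distr_r. apply Rmult_le_compat_r.
      left; apply Rinv_0_lt_compat; auto. lra.
    + rewrite <- Rmult_plus_distr_r. apply Rmult_le_compat_r.
      left; apply Rinv_0_lt_compat; auto. lra.
  - replace (Finite l) with (Finite (l + - 0)) by (f_equal; ring).
    apply is_lim_seq_plus'; auto.
    replace (Finite (- 0)) with (Rbar_opp 0) by (simpl; f_equal; ring).
    apply -> is_lim_seq_opp. auto.
  - replace (Finite l) with (Finite (l + 0)) by (f_equal; ring).
    apply is_lim_seq_plus'; auto.
Qed.

Lemma freq_or (F : nat -> R) :
  (exists d, 0 < d /\ exists N, forall n, (N <= n)%nat -> d <= F n) \/
  (forall d, 0 < d -> forall N, exists n, (N <= n)%nat /\ F n < d).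
Proof.
  destruct (classic (forall d, 0 < d -> forall N, exists n, (N <= n)%nat /\ F n < d)) as [H|H]; auto.
  left. apply not_all_ex_not in H. destruct H as [d H].
  apply imply_to_and in H. destruct H as [Hd H]. apply not_all_ex_not in H.
  destruct H as [N H]. exists d. split; auto. exists N. intros n Hn.
  destruct (Rle_or_lt d (F n)); auto. exfalso. apply H. exists n; auto.
Qed.

Lemma freq_or_S (S : nat -> Prop) (F : nat -> R) :
  (exists d, 0 < d /\ exists N, forall n, (N <= n)%nat -> S n -> d <= F n) \/
  (forall d, 0 < d -> forall N, exists n, (N <= n)%nat /\ S n /\ F n < d).
Proof.
  destruct (classic (forall d, 0 < d -> forall N, exists n, (N <= n)%nat /\ S n /\ F n < d)) as [H|H]; auto.
  left. apply not_all_ex_not in H. destruct H as [d H].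
  apply imply_to_and in H. destruct H as [Hd H]. apply not_all_ex_not in H.
  destruct H as [N H]. exists d. split; auto. exists N. intros n Hn HS.
  destruct (Rle_or_lt d (F n)); auto. exfalso. apply H. exists n; auto.
Qed.

Lemma pos_of_ev (F : nat -> R) :
  (exists d, 0 < d /\ exists N, forall n, (N <= n)%nat -> d <= F n) ->
  Rbar_lt 0 (LimInf_seq F).
Proof.
  intros [d [Hd [N HN]]].
  assert (H := LimInf_le (fun _ => d) F (ex_intro _ N HN)).
  rewrite LimInf_seq_const in H. destruct (LimInf_seq F); simpl in *; lra.
Qed.

Lemma ev_of_pos (F : nat -> R) :
  Rbar_lt 0 (LimInf_seq F) ->
  exists d, 0 < d /\ exists N, forall n, (N <= n)%nat -> d <= F n.
Proof.
  destruct (ex_LimInf_seq F) as [l Hl]. rewrite (is_LimInf_seq_unique _ _ Hl).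
  destruct l as [l| |]; simpl; intros H; try contradiction.
  - assert (Hp : 0 < l / 2) by lra.
    destruct (Hl (mkposreal _ Hp)) as [_ [N HN]]. exists (l/2). split; auto.
    exists N. intros n Hn. specialize (HN n Hn). simpl in HN. lra.
  - destruct (Hl 1) as [N HN]. exists 1. split; [lra|]. exists N. intros n Hn.
    left; auto.
Qed.

Lemma mono f n P Q p q : admissible_f f -> (1 <= n)%nat ->
  (1 <= P)%nat -> (P <= p)%nat -> (p <= n)%nat ->
  (1 <= Q)%nat -> (Q <= q)%nat -> (q <= n)%nat -> f n P Q <= f n p q.
Proof.
  intros Hf Hn. destruct (Hf n Hn) as [_ [H1 H2]]. intros.
  apply Rle_trans with (f n p Q). apply H1; lia. apply H2; lia.
Qed.

Lemma cover_contra f (p q P Q : nat -> nat) (S : nat -> Prop) :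
  admissible_f f -> admissible_seq p q -> admissible_seq P Q -> liminf_pos f P Q ->
  (exists N, forall n, (N <= n)%nat -> S n -> (P n <= p n)%nat /\ (Q n <= q n)%nat) ->
  (forall d, 0 < d -> forall N, exists n, (N <= n)%nat /\ S n /\ f n (p n) (q n) < d) ->
  False.
Proof.
  intros Hf Hpq HPQ Hl [N1 HN1] Hfr. apply ev_of_pos in Hl.
  destruct Hl as [d [Hd [N2 HN2]]].
  destruct (Hfr d Hd (max 1 (max N1 N2))) as [n [Hn [HS Hlt]]].
  specialize (HN2 n ltac:(lia)). specialize (HN1 n ltac:(lia) HS).
  destruct (Hpq n ltac:(lia)) as [a1 [a2 a3]].
  destruct (HPQ n ltac:(lia)) as [b1 [b2 b3]].
  assert (f n (P n) (Q n) <= f n (p n) (q n)).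
  { apply mono; auto; lia. }
  lra.
Qed.

Definition Hyp (f : nat -> nat -> nat -> R) := forall p q : nat -> nat, admissible_seq p q ->
     (cond_i p q \/ cond_ii p q \/ cond_iii p q) -> liminf_pos f p q.

Lemma maxnfl_err y : 0 <= y -> Rabs (INR (Nat.max 1 (nfl y)) - y) <= 1.
Proof.
  intros Hy. pose proof (nfl_spec y Hy) as [H1 H2].
  destruct (le_lt_dec 1 (nfl y)).
  - rewrite Nat.max_r by lia. apply Rabs_le; lra.
  - rewrite Nat.max_l by lia. assert (nfl y = 0%nat) by lia. rewrite H in *. simpl in *.
    apply Rabs_le; lra.
Qed.

Lemma sqrt_le_self x : 1 <= x -> sqrt x <= x.
Proof.
  intros H. assert (1 <= sqrt x) by (rewrite <- sqrt_1; apply sqrt_le_1_alt; auto).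
  pattern x at 2; rewrite <- (sqrt_sqrt x) by lra. nra.
Qed.

Lemma caseA f p q c (K : nat) : admissible_f f -> Hyp f -> admissible_seq p q -> 0 < c ->
  (exists N, forall n, (N <= n)%nat -> c * INR n <= INR (p n) * INR (q n)) ->
  (forall d, 0 < d -> forall N, exists n, (N <= n)%nat /\ (q n <= K)%nat /\ f n (p n) (q n) < d) ->
  False.
Proof.
  intros Hf Hy Hpq Hc [N0 HN0] Hfr.
  set (a := Rmin (1/2) (c / (INR K + 1))).
  assert (HK : 0 < INR K + 1) by (pose proof (pos_INR K); lra).
  assert (Ha : 0 < a < 1).
  { unfold a. split. apply Rmin_pos. lra. apply Rdiv_lt_0_compat; lra.
    pose proof (Rmin_l (1/2) (c / (INR K + 1))). lra. }
  set (Ap := fun n => Nat.max 1 (nfl (a * INR n))).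
  set (Aq := fun n : nat => 1%nat).
  assert (Hadm : admissible_seq Ap Aq).
  { intros n Hn. unfold Ap, Aq. split; [lia|]. split; [lia|].
    apply Nat.max_lub; auto. apply nfl_le.
    pose proof (pos_INR n); nra. pose proof (pos_INR n); nra. }
  apply (cover_contra f p q Ap Aq (fun n => (q n <= K)%nat)); auto.
  - apply Hy; auto. left. split; [reflexivity|]. exists a. split; [|lra].
    apply squeeze_err with (x := fun n => a * INR n) (h := fun _ => 1).
    + eapply is_lim_seq_ext; [|apply lim_inv_INR]. intros n; simpl. unfold Rdiv; ring.
    + exists 1%nat. intros n Hn. apply lt_0_INR; lia.
    + exists 0%nat. intros n _. unfold Ap. apply maxnfl_err. pose proof (pos_INR n); nra.
    + apply is_lim_seq_ext_loc with (u := fun _ => a). exists 1%nat. intros n Hn.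
      field. apply not_0_INR; lia. apply is_lim_seq_const.
  - exists (max 1 N0). intros n Hn HS. destruct (Hpq n ltac:(lia)) as [b1 [b2 b3]].
    unfold Ap, Aq. split; [|lia]. apply Nat.max_lub; [lia|]. apply nfl_le.
    pose proof (pos_INR n); nra.
    specialize (HN0 n ltac:(lia)). apply le_INR in HS.
    assert (Hp0 := pos_INR (p n)).
    assert (INR (p n) * INR (q n) <= INR (p n) * (INR K + 1)) by (apply Rmult_le_compat_l; lra).
    apply Rle_trans with (c / (INR K + 1) * INR n).
    apply Rmult_le_compat_r. apply pos_INR. apply Rmin_r.
    apply Rmult_le_reg_r with (INR K + 1); auto.
    replace (c / (INR K + 1) * INR n * (INR K + 1)) with (c * INR n) by (field; lra). lra.
Qed.

Lemma caseC f p q c eps : admissible_f f -> Hyp f -> admissible_seq p q -> 0 < c -> 0 < eps ->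
  (exists N, forall n, (N <= n)%nat -> c * INR n <= INR (p n) * INR (q n)) ->
  (forall d, 0 < d -> forall N, exists n, (N <= n)%nat /\ eps * INR (p n) <= INR (q n) /\ f n (p n) (q n) < d) ->
  False.
Proof.
  intros Hf Hy Hpq Hc He [N0 HN0] Hfr.
  set (b := Rmin 1 (sqrt (eps * c))).
  assert (Hb : 0 < b <= 1).
  { unfold b. split. apply Rmin_pos. lra. apply sqrt_lt_R0. nra. apply Rmin_l. }
  set (s := fun n => Nat.max 1 (nfl (b * sqrt (INR n)))).
  assert (Hadm : admissible_seq s s).
  { intros n Hn. unfold s. split; [lia|]. split; [lia|].
    apply Nat.max_lub; auto. apply nfl_le.
    pose proof (sqrt_pos (INR n)); nra.
    assert (1 <= INR n) by (apply (le_INR 1); auto).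
    pose proof (sqrt_le_self (INR n) H). pose proof (sqrt_pos (INR n)). nra. }
  assert (Hlim : is_lim_seq (fun n => INR (s n) / sqrt (INR n)) b).
  { apply squeeze_err with (x := fun n => b * sqrt (INR n)) (h := fun _ => 1).
    + eapply is_lim_seq_ext; [|apply (is_lim_seq_inv _ _ lim_sqrt_INR)].
      intros n; simpl. unfold Rdiv; ring. discriminate.
    + exists 1%nat. intros n Hn. apply sqrt_lt_R0. apply lt_0_INR; lia.
    + exists 0%nat. intros n _. unfold s. apply maxnfl_err. pose proof (sqrt_pos (INR n)); nra.
    + apply is_lim_seq_ext_loc with (u := fun _ => b). exists 1%nat. intros n Hn.
      field. apply Rgt_not_eq. apply sqrt_lt_R0. apply lt_0_INR; lia. apply is_lim_seq_const. }
  apply (cover_contra f p q s s (fun n => eps * INR (p n) <= INR (q n))); auto.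
  - apply Hy; auto. right; right. split; exists b; split; auto; lra.
  - exists (max 1 N0). intros n Hn HS. destruct (Hpq n ltac:(lia)) as [b1 [b2 b3]].
    specialize (HN0 n ltac:(lia)).
    assert (s n <= q n)%nat.
    { unfold s. apply Nat.max_lub; [lia|]. apply nfl_le.
      pose proof (sqrt_pos (INR n)); nra.
      assert (Hq0 := pos_INR (q n)). assert (Hp0 := pos_INR (p n)).
      assert (eps * c * INR n <= INR (q n) * INR (q n)).
      { apply Rle_trans with (eps * (INR (p n) * INR (q n))). nra.
        replace (eps * (INR (p n) * INR (q n))) with ((eps * INR (p n)) * INR (q n)) by ring.
        apply Rmult_le_compat_r; auto. }
      apply sqrt_le_1_alt in H. rewrite sqrt_square in H by auto.
      rewrite sqrt_mult_alt in H by nra.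
      apply Rle_trans with (sqrt (eps * c) * sqrt (INR n)); auto.
      apply Rmult_le_compat_r. apply sqrt_pos. apply Rmin_r. }
    lia.
Qed.

Definition Rt (n : nat) : nat := Nat.sqrt (Nat.sqrt n).

Lemma Rt_facts n : (1 <= n)%nat -> (1 <= Rt n)%nat /\ (Rt n <= n)%nat /\
   (Rt n * Rt n * (Rt n * Rt n) <= n)%nat.
Proof.
  intros Hn. unfold Rt. split; [|split].
  - apply (Nat.sqrt_le_square). simpl. apply Nat.sqrt_le_square. lia.
  - pose proof (Nat.sqrt_le_lin n). pose proof (Nat.sqrt_le_lin (Nat.sqrt n)). lia.
  - pose proof (Nat.sqrt_spec' n) as [H1 _]. pose proof (Nat.sqrt_spec' (Nat.sqrt n)) as [H2 _].
    apply Nat.le_trans with (Nat.sqrt n * Nat.sqrt n)%nat; auto. apply Nat.mul_le_mono; auto.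
Qed.

Lemma Rt_big m n : (m * m * (m * m) <= n)%nat -> (m <= Rt n)%nat.
Proof.
  intros H. unfold Rt. apply -> Nat.sqrt_le_square. apply -> Nat.sqrt_le_square. exact H.
Qed.

Lemma nat_above (M : R) : exists m : nat, M < INR m.
Proof.
  exists (nfl (Rmax M 0) + 1)%nat. pose proof (nfl_spec (Rmax M 0) (Rmax_r M 0)).
  rewrite plus_INR. simpl. pose proof (Rmax_l M 0). lra.
Qed.

Lemma Rt_lim : is_lim_seq (fun n => INR (Rt n)) p_infty.
Proof.
  apply is_lim_seq_spec. intros M. destruct (nat_above M) as [m Hm].
  exists (m * m * (m * m))%nat. intros n Hn. apply Rt_big in Hn. apply le_INR in Hn. lra.
Qed.

Lemma inv_Rt_lim : is_lim_seq (fun n => / INR (Rt n)) 0.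
Proof.
  replace (Finite 0) with (Rbar_inv p_infty) by reflexivity.
  apply is_lim_seq_inv. apply Rt_lim. discriminate.
Qed.

Lemma RR_n_lim : is_lim_seq (fun n => INR (Rt n) * INR (Rt n) / INR n) 0.
Proof.
  apply is_lim_seq_le_le_loc with (u := fun _ => 0) (w := fun n => / INR (Rt n)).
  - exists 1%nat. intros n Hn. destruct (Rt_facts n Hn) as [H1 [H2 H3]].
    assert (Hr : 1 <= INR (Rt n)) by (apply (le_INR 1); auto).
    assert (Hn' : 0 < INR n) by (apply lt_0_INR; lia).
    assert (H4 : (Rt n * Rt n * Rt n <= n)%nat) by nia.
    apply le_INR in H4. rewrite !mult_INR in H4.
    split. apply Rmult_le_pos. nra. left; apply Rinv_0_lt_compat; auto.
    apply Rmult_le_reg_r with (INR n * INR (Rt n)). nra.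
    replace (INR (Rt n) * INR (Rt n) / INR n * (INR n * INR (Rt n))) with
      (INR (Rt n) * INR (Rt n) * INR (Rt n)) by (field; lra).
    replace (/ INR (Rt n) * (INR n * INR (Rt n))) with (INR n) by (field; lra). lra.
  - apply is_lim_seq_const.
  - apply inv_Rt_lim.
Qed.

Lemma R_n_lim : is_lim_seq (fun n => INR (Rt n) / INR n) 0.
Proof.
  apply is_lim_seq_le_le_loc with (u := fun _ => 0) (w := fun n => INR (Rt n) * INR (Rt n) / INR n).
  - exists 1%nat. intros n Hn. destruct (Rt_facts n Hn) as [H1 [H2 H3]].
    assert (Hr : 1 <= INR (Rt n)) by (apply (le_INR 1); auto).
    assert (Hn' : 0 < INR n) by (apply lt_0_INR; lia).
    unfold Rdiv. split. apply Rmult_le_pos. lra. left; apply Rinv_0_lt_compat; auto.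
    apply Rmult_le_compat_r. left; apply Rinv_0_lt_compat; auto. nra.
  - apply is_lim_seq_const.
  - apply RR_n_lim.
Qed.

Section Default.
Variable c0 : R.
Hypothesis Hc0 : 0 < c0.

Definition DX n := c0 * INR n / INR (Rt n).
Definition DP n := Nat.min n (Nat.max (Rt n) (nfl (DX n))).

Lemma DP_adm : admissible_seq DP Rt.
Proof.
  intros n Hn. destruct (Rt_facts n Hn) as [H1 [H2 H3]]. unfold DP. lia.
Qed.

Lemma DP_ev : eventually (fun n => DP n = nfl (DX n)).
Proof.
  destruct (proj2 (is_lim_seq_spec _ _) Rt_lim (c0 + / c0)) as [N HN].
  exists (max 1 N). intros n Hn. specialize (HN n ltac:(lia)).
  destruct (Rt_facts n ltac:(lia)) as [H1 [H2 H3]].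
  assert (Hr : 1 <= INR (Rt n)) by (apply (le_INR 1); auto).
  assert (Hn' : 0 < INR n) by (apply lt_0_INR; lia).
  assert (Hic : 0 < / c0) by (apply Rinv_0_lt_compat; auto).
  apply le_INR in H3. rewrite !mult_INR in H3.
  assert (HX : 0 <= DX n) by (unfold DX; apply Rmult_le_pos; [nra| left; apply Rinv_0_lt_compat; lra]).
  assert (c0 * INR (Rt n) > 1).
  { apply Rmult_lt_reg_r with (/ c0); auto. replace (c0 * INR (Rt n) * / c0) with (INR (Rt n)) by (field; lra). lra. }
  assert (A1 : (Rt n <= nfl (DX n))%nat).
  { apply le_nfl. unfold DX. apply Rmult_le_reg_r with (INR (Rt n)). lra.
    replace (c0 * INR n / INR (Rt n) * INR (Rt n)) with (c0 * INR n) by (field; lra).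
    assert (INR (Rt n) * INR (Rt n) <= INR (Rt n) * INR (Rt n) * (c0 * INR (Rt n))).
    { pattern (INR (Rt n) * INR (Rt n)) at 1; rewrite <- Rmult_1_r. apply Rmult_le_compat_l; nra. }
    nra. }
  assert (A2 : (nfl (DX n) <= n)%nat).
  { apply nfl_le; auto. unfold DX. apply Rmult_le_reg_r with (INR (Rt n)). lra.
    replace (c0 * INR n / INR (Rt n) * INR (Rt n)) with (c0 * INR n) by (field; lra).
    assert (c0 < INR (Rt n)) by lra. nra. }
  unfold DP. lia.
Qed.

Lemma DP_prod_lim : is_lim_seq (fun n => INR (DP n) * INR (Rt n) / INR n) c0.
Proof.
  apply squeeze_err with (x := fun n => c0 * INR n) (h := fun n => INR (Rt n)).
  - apply R_n_lim.
  - exists 1%nat. intros n Hn. apply lt_0_INR; lia.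
  - destruct DP_ev as [N HN]. exists (max 1 N). intros n Hn. rewrite HN by lia.
    destruct (Rt_facts n ltac:(lia)) as [H1 [H2 H3]].
    assert (Hr : 1 <= INR (Rt n)) by (apply (le_INR 1); auto).
    assert (Hn' : 0 < INR n) by (apply lt_0_INR; lia).
    assert (HX : 0 <= DX n) by (unfold DX; apply Rmult_le_pos; [nra| left; apply Rinv_0_lt_compat; lra]).
    destruct (nfl_spec _ HX) as [B1 B2].
    assert (E : c0 * INR n = DX n * INR (Rt n)) by (unfold DX; field; lra).
    rewrite E. apply Rabs_le. split; nra.
  - apply is_lim_seq_ext_loc with (u := fun _ => c0). exists 1%nat. intros n Hn.
    field. apply not_0_INR; lia. apply is_lim_seq_const.
Qed.

Lemma DP_ratio_lim : is_lim_seq (fun n => INR (Rt n) / INR (DP n)) 0.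
Proof.
  apply is_lim_seq_ext_loc with
    (u := fun n => (INR (Rt n) * INR (Rt n) / INR n) * / (INR (DP n) * INR (Rt n) / INR n)).
  - exists 1%nat. intros n Hn. destruct (Rt_facts n Hn) as [H1 [H2 H3]].
    destruct (DP_adm n Hn) as [D1 [D2 D3]].
    assert (Hr : 1 <= INR (Rt n)) by (apply (le_INR 1); auto).
    assert (Hp : 1 <= INR (DP n)) by (apply (le_INR 1); lia).
    assert (Hn' : 0 < INR n) by (apply lt_0_INR; lia).
    field. lra.
  - replace (Finite 0) with (Finite (0 * / c0)) by (f_equal; ring).
    apply is_lim_seq_mult'. apply RR_n_lim.
    apply (is_lim_seq_inv _ (Finite c0)). apply DP_prod_lim.
    intro E; injection E; lra.
Qed.

End Default.

Lemma mix_lim (u v w : nat -> R) (l : Rbar) :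
  is_lim_seq u l -> is_lim_seq v l -> (forall n, w n = u n \/ w n = v n) -> is_lim_seq w l.
Proof.
  intros Hu Hv Hw P HP. specialize (Hu P HP). specialize (Hv P HP).
  destruct Hu as [N1 H1]. destruct Hv as [N2 H2]. exists (max N1 N2). intros n Hn.
  destruct (Hw n) as [E|E]; unfold filtermap in *; simpl; rewrite E; [apply H1|apply H2]; lia.
Qed.

Lemma mix_pinf (u w : nat -> R) (S : nat -> Prop) :
  is_lim_seq u p_infty -> (forall n, ~ S n -> w n = u n) ->
  (forall M, eventually (fun n => S n -> M < w n)) -> is_lim_seq w p_infty.
Proof.
  intros Hu Hw HS. apply is_lim_seq_spec. intros M.
  destruct (proj2 (is_lim_seq_spec _ _) Hu M) as [N1 H1]. destruct (HS M) as [N2 H2].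
  exists (max N1 N2). intros n Hn. destruct (classic (S n)) as [h|h].
  apply H2; auto; lia. rewrite Hw by auto. apply H1; lia.
Qed.

Lemma mix_fin (u w : nat -> R) (l : R) (S : nat -> Prop) :
  is_lim_seq u l -> (forall n, ~ S n -> w n = u n) ->
  (forall eps : posreal, eventually (fun n => S n -> Rabs (w n - l) < eps)) -> is_lim_seq w l.
Proof.
  intros Hu Hw HS. apply is_lim_seq_spec. intros eps.
  destruct (proj2 (is_lim_seq_spec _ _) Hu eps) as [N1 H1]. destruct (HS eps) as [N2 H2].
  exists (max N1 N2). intros n Hn. destruct (classic (S n)) as [h|h].
  apply H2; auto; lia. rewrite Hw by auto. apply H1; lia.
Qed.

Lemma caseB f p q c0 : admissible_f f -> Hyp f -> admissible_seq p q -> 0 < c0 ->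
  is_lim_seq (fun n => INR (p n) * INR (q n) / INR n) c0 ->
  (forall k M, exists n, (M <= n)%nat /\ (k < q n)%nat /\ ((k+1) * q n < p n)%nat /\
      f n (p n) (q n) < / (INR k + 1)) -> False.
Proof.
  intros Hf Hy Hpq Hc0 Hlim G.
  assert (X : forall k M, {n | (M <= n)%nat /\ (k < q n)%nat /\ ((k+1) * q n < p n)%nat /\
      f n (p n) (q n) < / (INR k + 1)}).
  { intros k M. apply constructive_indefinite_description. apply G. }
  set (g := fun k M => proj1_sig (X k M)).
  assert (Hg : forall k M, (M <= g k M)%nat /\ (k < q (g k M))%nat /\ ((k+1) * q (g k M) < p (g k M))%nat /\
      f (g k M) (p (g k M)) (q (g k M)) < / (INR k + 1)).
  { intros k M. unfold g. apply (proj2_sig (X k M)). }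
  clearbody g. clear X.
  set (phi := nat_rec (fun _ => nat) (g 0%nat 0%nat) (fun k r => g (S k) (S r))).
  assert (HphiS : forall k, phi (S k) = g (S k) (S (phi k))) by reflexivity.
  assert (Hphi0 : phi 0%nat = g 0%nat 0%nat) by reflexivity.
  clearbody phi.
  assert (Hprop : forall k, (k < q (phi k))%nat /\ ((k+1) * q (phi k) < p (phi k))%nat /\
      f (phi k) (p (phi k)) (q (phi k)) < / (INR k + 1)).
  { intros [|k]. rewrite Hphi0. apply Hg. rewrite HphiS. apply Hg. }
  assert (Hinc : forall k, (phi k < phi (S k))%nat).
  { intros k. rewrite HphiS. destruct (Hg (S k) (S (phi k))). lia. }
  assert (Hge : forall k, (k <= phi k)%nat).
  { induction k. lia. specialize (Hinc k). lia. }
  assert (Hmono : forall a b, (a < b)%nat -> (phi a < phi b)%nat).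
  { intros a b Hab. induction b. lia. destruct (Nat.eq_dec a b). subst. apply Hinc.
    specialize (Hinc b). assert (a < b)%nat by lia. specialize (IHb H). lia. }
  set (Img := fun n => exists k, phi k = n).
  assert (HImg : forall m, exists N, forall n, (N <= n)%nat -> Img n ->
     (m < q n)%nat /\ ((m+1) * q n < p n)%nat).
  { intros m. exists (phi m). intros n Hn [k Hk]. subst n.
    assert (m <= k)%nat. { destruct (le_lt_dec m k); auto. specialize (Hmono k m l). lia. }
    destruct (Hprop k) as [A [B _]]. split. lia.
    apply Nat.le_lt_trans with ((k+1) * q (phi k))%nat; auto. apply Nat.mul_le_mono_r. lia. }
  set (Bp := fun n => if excluded_middle_informative (Img n) then p n else DP c0 n).
  set (Bq := fun n => if excluded_middle_informative (Img n) then q n else Rt n).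
  assert (HBn : forall n, ~ Img n -> Bp n = DP c0 n /\ Bq n = Rt n).
  { intros n Hn. unfold Bp, Bq. destruct (excluded_middle_informative (Img n)); tauto. }
  assert (HBy : forall n, Img n -> Bp n = p n /\ Bq n = q n).
  { intros n Hn. unfold Bp, Bq. destruct (excluded_middle_informative (Img n)); tauto. }
  apply (cover_contra f p q Bp Bq Img); auto.
  - intros n Hn. destruct (classic (Img n)) as [h|h].
    + destruct (HBy n h) as [-> ->]. auto.
    + destruct (HBn n h) as [-> ->]. apply DP_adm; auto.
  - apply Hy.
    + intros n Hn. destruct (classic (Img n)) as [h|h].
      * destruct (HBy n h) as [-> ->]. auto.
      * destruct (HBn n h) as [-> ->]. apply DP_adm; auto.
    + right; left. split; [|split].
      * apply mix_pinf with (u := fun n => INR (Rt n)) (S := Img). apply Rt_lim.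
        intros n h. destruct (HBn n h) as [_ ->]. auto.
        intros M. destruct (nat_above M) as [m Hm]. destruct (HImg m) as [N HN].
        exists N. intros n Hn h. destruct (HBy n h) as [_ ->]. destruct (HN n Hn h) as [A _].
        apply lt_INR in A. lra.
      * apply mix_fin with (u := fun n => INR (Rt n) / INR (DP c0 n)) (S := Img). apply DP_ratio_lim; auto.
        intros n h. destruct (HBn n h) as [-> ->]. auto.
        intros eps. destruct (nat_above (/ eps)) as [m Hm]. destruct (HImg m) as [N HN].
        exists (max 1 N). intros n Hn h. destruct (HBy n h) as [-> ->].
        destruct (HN n ltac:(lia) h) as [A B].
        destruct (Hpq n ltac:(lia)) as [C1 [C2 C3]].
        pose proof (cond_pos eps) as He.
        apply lt_INR in B. rewrite mult_INR, plus_INR in B. simpl in B.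
        assert (Hq : 1 <= INR (q n)) by (apply (le_INR 1); auto).
        assert (Hp : 0 < INR (p n)) by (apply lt_0_INR; lia).
        assert (eps * INR m > 1).
        { apply Rmult_lt_reg_r with (/ eps). apply Rinv_0_lt_compat; auto.
          replace (eps * INR m * / eps) with (INR m) by (field; lra). lra. }
        rewrite Rminus_0_r. rewrite Rabs_pos_eq.
        apply Rmult_lt_reg_r with (INR (p n)); auto.
        replace (INR (q n) / INR (p n) * INR (p n)) with (INR (q n)) by (field; lra).
        nra.
        unfold Rdiv. apply Rmult_le_pos. lra. left; apply Rinv_0_lt_compat; auto.
    * exists c0. split; auto.
      apply mix_lim with (u := fun n => INR (p n) * INR (q n) / INR n)
        (v := fun n => INR (DP c0 n) * INR (Rt n) / INR n); auto.
      apply DP_prod_lim; auto.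
      intros n. destruct (classic (Img n)) as [h|h].
      left. destruct (HBy n h) as [-> ->]. auto.
      right. destruct (HBn n h) as [-> ->]. auto.
  - exists 0%nat. intros n _ h. destruct (HBy n h) as [-> ->]. lia.
  - intros d Hd N. destruct (nat_above (/ d)) as [m Hm].
    exists (phi (max N m)). split. specialize (Hge (max N m)). lia.
    split. exists (max N m); auto.
    destruct (Hprop (max N m)) as [_ [_ Hf']].
    eapply Rlt_le_trans; [apply Hf'|].
    assert (INR m <= INR (max N m)) by (apply le_INR; lia).
    assert (Hid : 0 < / d) by (apply Rinv_0_lt_compat; auto).
    rewrite <- (Rinv_inv d). apply Rinv_le_contravar. auto. lra.
Qed.

Theorem lemma2p15 (f : nat -> nat -> nat -> R) :
  admissible_f f ->
  (forall p q : nat -> nat, admissible_seq p q ->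
     (cond_i p q \/ cond_ii p q \/ cond_iii p q) -> liminf_pos f p q) ->
  forall p q : nat -> nat, admissible_seq p q ->
    lim_in_pos (fun n => INR (p n) * INR (q n) / INR n) ->
    liminf_pos f p q.
Proof.
  intros Hf Hy p q Hpq [c0 [Hlim Hc0]]. unfold liminf_pos. apply pos_of_ev.
  destruct (freq_or (fun n => f n (p n) (q n))) as [H|Hfr]; auto. exfalso.
  assert (Hc : 0 < c0 / 2) by lra.
  assert (Hev : exists N, forall n, (N <= n)%nat -> c0 / 2 * INR n <= INR (p n) * INR (q n)).
  { destruct (proj2 (is_lim_seq_spec _ _) Hlim (mkposreal _ Hc)) as [N HN].
    exists (max 1 N). intros n Hn. specialize (HN n ltac:(lia)). simpl in HN.
    apply Rabs_lt_between' in HN.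
    assert (Hn' : 0 < INR n) by (apply lt_0_INR; lia).
    destruct HN as [HN _].
    apply Rmult_lt_compat_r with (r := INR n) in HN; auto.
    replace (INR (p n) * INR (q n) / INR n * INR n) with (INR (p n) * INR (q n)) in HN by (field; lra).
    lra. }
  destruct (classic (exists K, forall d, 0 < d -> forall N, exists n, (N <= n)%nat /\
      (q n <= K)%nat /\ f n (p n) (q n) < d)) as [[K HK]|nA].
  { exact (caseA f p q (c0/2) K Hf Hy Hpq Hc Hev HK). }
  destruct (classic (exists eps, 0 < eps /\ forall d, 0 < d -> forall N, exists n, (N <= n)%nat /\
      eps * INR (p n) <= INR (q n) /\ f n (p n) (q n) < d)) as [[eps [He HC]]|nC].
  { exact (caseC f p q (c0/2) eps Hf Hy Hpq Hc He Hev HC). }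
  apply (caseB f p q c0 Hf Hy Hpq Hc0 Hlim).
  intros k M.
  destruct (freq_or_S (fun n => (q n <= k)%nat) (fun n => f n (p n) (q n))) as [[d1 [Hd1 [N1 HN1]]]|HA].
  2:{ exfalso. apply nA. exists k. exact HA. }
  assert (Hek : 0 < / (INR k + 1)) by (apply Rinv_0_lt_compat; pose proof (pos_INR k); lra).
  destruct (freq_or_S (fun n => / (INR k + 1) * INR (p n) <= INR (q n)) (fun n => f n (p n) (q n)))
    as [[d2 [Hd2 [N2 HN2]]]|HC].
  2:{ exfalso. apply nC. exists (/ (INR k + 1)). split; auto. }
  set (d := Rmin (Rmin d1 d2) (/ (INR k + 1))).
  assert (Hd : 0 < d) by (unfold d; repeat apply Rmin_pos; auto).
  destruct (Hfr d Hd (max M (max N1 N2))) as [n [Hn Hfn]].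
  assert (E1 : d <= d1) by (unfold d; pose proof (Rmin_l (Rmin d1 d2) (/ (INR k + 1))); pose proof (Rmin_l d1 d2); lra).
  assert (E2 : d <= d2) by (unfold d; pose proof (Rmin_l (Rmin d1 d2) (/ (INR k + 1))); pose proof (Rmin_r d1 d2); lra).
  assert (E3 : d <= / (INR k + 1)) by (unfold d; apply Rmin_r).
  exists n. split; [lia|]. split; [|split].
  - destruct (le_lt_dec (q n) k) as [h|h]; auto. specialize (HN1 n ltac:(lia) h). lra.
  - destruct (Rle_or_lt (/ (INR k + 1) * INR (p n)) (INR (q n))) as [h|h].
    + specialize (HN2 n ltac:(lia) h). lra.
    + apply INR_lt. rewrite mult_INR, plus_INR. simpl.
      assert (Hk1 : 0 < INR k + 1) by (pose proof (pos_INR k); lra).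
      apply Rmult_lt_compat_l with (r := INR k + 1) in h; auto.
      replace ((INR k + 1) * (/ (INR k + 1) * INR (p n))) with (INR (p n)) in h by (field; lra).
      lra.
  - lra.
Qed.
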